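(* Take $\Omega=(0,\infty)$. The gamma function is a germinating function: for every $\delta>0$ there exists a Lebesgue measurable set $S\subseteq(0,\infty)$ with Lebesgue measure $\lambda(S)<\delta$ that is a fundamental set for $\Gamma$, i.e. $\mathrm{Cl}_\Omega(S)=(0,\infty)$.
   Context: Let $\Omega$ be either $(0,\infty)$ or $D=\mathbb{C}\setminus\{0,-1,-2,\dots\}$. An admissible instance (relative to $\Omega$) is one of the following finite lists of points, all entries of which are required to lie in $\Omega$: (i) $(z+1,\,z)$ for $z\in\Omega$ with $z+1\in\Omega$ (corresponding to the identity $\Gamma(z+1)=z\Gamma(z)$); (ii) $(z,\,1-z)$ for $z\in\Omega\setminus\mathbb{Z}$ with $1-z\in\Omega$ (corresponding to $\Gamma(z)\Gamma(1-z)=\pi/\sin(\pi z)$); (iii) for an integer $n\ge 2$, $\big(z,\,\tfrac{z}{n},\,\tfrac{z+1}{n},\dots,\tfrac{z+n-1}{n}\big)$ (corresponding to Gauss's multiplication formula $(2\pi)^{(n-1)/2}n^{1/2-z}\Gamma(z)=\prod_{j=0}^{n-1}\Gamma(\tfrac{z+j}{n})$). For $B\subseteq\Omega$, a point $p\in\Omega$ is obtained from $B$ in one step if there is an admissible instance in which $p$ occurs exactly once as an entry and every other entry lies in $B$. Set $B_0=B$, $B_{i+1}=B_i\cup\{p: p \text{ obtained from } B_i \text{ in one step}\}$, and $\mathrm{Cl}_\Omega(B)=\bigcup_{i\ge0}B_i$ (the set of points at which the value of $\Gamma$ is determined by its values on $B$ via finitely many applications of the identities). For $A,B\subseteq\Omega$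 write $A\preceq B$ if $A\subseteq \mathrm{Cl}_\Omega(B)$. A set $S\subseteq\Omega$ is a fundamental set (for $\Gamma$ on $\Omega$) if $\mathrm{Cl}_\Omega(S)=\Omega$. *)

(* Defs.v *)
From HB Require Import structures.
From mathcomp Require Import all_boot all_order all_algebra.
From mathcomp Require Import all_classical all_reals all_analysis.
Set Implicit Arguments. Unset Strict Implicit. Unset Printing Implicit Defensive.
Import Order.TTheory GRing.Theory Num.Theory.
Local Open Scope classical_set_scope.
Local Open Scope ring_scope.

Section GammaClosure.
Variable R : realType.

Definition Omega : set R := [set x | 0 < x].

Definition is_int (z : R) : Prop := exists k : int, z = k%:~R.

(* Gauss multiplication instance (z, z/n, (z+1)/n, ..., (z+n-1)/n) *)
Definition gauss_list (n : nat) (z : R) : seq R :=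
  z :: [seq (z + j%:R) / n%:R | j <- iota 0 n].

Definition admissible (Om : set R) (l : seq R) : Prop :=
  (forall q, q \in l -> Om q) /\
  ((exists z : R, l = [:: z + 1; z]) \/
   (exists z : R, ~ is_int z /\ l = [:: z; 1 - z]) \/
   (exists (n : nat) (z : R), (2 <= n)%N /\ l = gauss_list n z)).

Definition one_step (Om : set R) (B : set R) (p : R) : Prop :=
  exists l : seq R, admissible Om l /\ count_mem p l = 1%N /\
    (forall q, q \in l -> q != p -> B q).

Fixpoint Bstage (Om : set R) (B : set R) (i : nat) : set R :=
  match i with
  | 0 => B
  | i'.+1 => Bstage Om B i' `|` one_step Om (Bstage Om B i')
  end.

Definition Cl (Om : set R) (B : set R) : set R :=
  \bigcup_(i in [set: nat]) Bstage Om B i.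

Definition fundamental_set (Om : set R) (S : set R) : Prop :=
  S `<=` Om /\ Cl Om S = Om.

End GammaClosure.

(* Main.v *)
Require Import Defs.
From HB Require Import structures.
From mathcomp Require Import all_boot all_order all_algebra.
From mathcomp Require Import all_classical all_reals all_analysis.
From mathcomp Require Import ring lra zify.
Import Order.TTheory GRing.Theory Num.Theory.
Local Open Scope classical_set_scope.
Local Open Scope ring_scope.
Lemma fl_bounds {R : realType} (t : R) :
  0 <= t - (Num.floor t)%:~R < 1.
Proof.
have /andP[h1 h2] := floor_itv t.
rewrite intrD in h2. apply/andP; split; lra.
Qed.

Definition dprop {R : realType} (x : R) (M : nat) : Prop :=
  exists d : nat, (0 < d <= M)%N /\
    exists k : int, `|d%:R * x - k%:~R| < M%:R^-1.

Lemma dirichlet (R : realType) (x : R) (m : nat) :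
  exists d : nat, (0 < d <= m.+1)%N /\
    exists k : int, `|d%:R * x - k%:~R| < (m.+1)%:R^-1.
Proof.
set M := m.+1.
pose fr (t : R) := t - (Num.floor t)%:~R.
pose g (i : nat) := Num.floor (M%:R * fr (i%:R * x)).
have g0 i : 0 <= g i.
  rewrite /g floor_ge0; have /andP[h _] := fl_bounds (i%:R * x).
  by apply: mulr_ge0 => //; rewrite /fr.
have gM i : (g i < M%:Z)%R.
  rewrite /g floor_lt_int; have /andP[_ h] := fl_bounds (i%:R * x).
  rewrite -/(fr _) in h.
  change ((M%:Z)%:~R : R) with (M%:R : R).
  by rewrite -[X in _ < X]mulr1 ltr_pM2l // ltr0n.
pose f (i : 'I_M.+1) : 'I_M := inord `|g i|%N.
have : ~~ injectiveb f.
  apply/negP => /injectiveP /leq_card; rewrite !card_ord.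
  by rewrite ltnn.
case/injectivePn => i [j] ij fij.
have absg k : (`|g k| < M)%N.
  by rewrite -ltz_nat gez0_abs ?g0 ?gM.
have gij : g i = g j.
  move/(congr1 val): fij; rewrite /f /= !inordK ?absg // => /eqP.
  by rewrite -eqz_nat !gez0_abs ?g0 // => /eqP.
suff key : forall a b : nat, g a = g b -> (a < b)%N -> (b <= M)%N -> dprop x M.
  case: (ltngtP i j) => [lij|lji|eij].
  - by apply: (key i j) => //; rewrite -ltnS.
  - by apply: (key j i) => //; rewrite -ltnS.
  - by move: ij; rewrite (val_inj eij) eqxx.
move=> a b gab lab lbM.
rewrite /dprop; exists (b - a)%N; split.
  by rewrite subn_gt0 lab /= (leq_trans (leq_subr _ _)).
exists (Num.floor (b%:R * x) - Num.floor (a%:R * x)).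
have -> : ((b - a)%N%:R * x - (Num.floor (b%:R * x) - Num.floor (a%:R * x))%:~R)
   = fr (b%:R * x) - fr (a%:R * x).
  by rewrite natrB ?(ltnW lab) // intrD intrN /fr; ring.
have cpos : (0 : R) < M%:R by rewrite ltr0n.
have ha := floor_itv (M%:R * fr (a%:R * x)).
have hb := floor_itv (M%:R * fr (b%:R * x)).
rewrite -/(g a) in ha; rewrite -/(g b) in hb; rewrite gab in ha.
rewrite intrD in ha hb.
move: ha hb; set G := (g b)%:~R; set u := fr (a%:R * x); set v := fr (b%:R * x).
move=> /andP[ha1 ha2] /andP[hb1 hb2].
rewrite -(ltr_pM2l cpos) mulfV ?gt_eqF // -[X in X * _]ger0_norm ?ltW // -normrM.
rewrite ltr_norml; apply/andP; split; lra.
Qed.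
Lemma stage_sub (R : realType) (S : set R) i :
  S `<=` @Omega R -> Bstage (@Omega R) S i `<=` @Omega R.
Proof.
move=> SO; elim: i => [|i IH] //= x [/IH //|[l [[lO _] [cnt _]]]].
apply: lO; apply/negPn/negP => /count_memPn; by rewrite cnt.
Qed.

Lemma closure_from (R : realType) (S : set R) :
  S `<=` @Omega R ->
  (forall x : R, 0 < x <= 1 -> S x \/ one_step (@Omega R) S x) ->
  Cl (@Omega R) S = @Omega R.
Proof.
move=> SO base; apply/seteqP; split.
  by move=> x [i _ /stage_sub]; apply.
have key : forall m : nat, forall x : R, m%:R < x <= m%:R + 1 ->
    Bstage (@Omega R) S m.+1 x.
  elim=> [|m IH] x /andP[h1 h2].
    rewrite add0r in h2; have [Sx|Ox] := base x (introT andP (conj h1 h2)).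
      by left.
    by right.
  right; exists [:: (x - 1) + 1; x - 1]; split; [split|split].
  - move=> q; rewrite !inE => /orP[/eqP->|/eqP->]; rewrite /Omega /=.
      rewrite -natr1 in h1; have := ler0n R m; rewrite subrK; lra.
    rewrite -natr1 in h1; have := ler0n R m; lra.
  - by left; exists (x - 1).
  - rewrite /= subrK eqxx /=.
    have -> : (x - 1 == x) = false by apply/negbTE; rewrite neq_lt; apply/orP; left; rewrite -natr1 in h1; lra.
    by [].
  - move=> q; rewrite !inE subrK => /orP[/eqP->|/eqP->]; first by rewrite eqxx.
    move=> _; apply: IH; apply/andP; rewrite -natr1 in h1 h2; split; lra.
move=> x /= x0.
have hc := ceil_itv x.
have c0 : 0 < Num.ceil x by rewrite ceil_gt0.
pose m := `|Num.ceil x - 1|%N.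
have mE : (m%:R : R) = (Num.ceil x - 1)%:~R.
  by rewrite /m -[LHS]/((Posz _)%:~R) gez0_abs // subr_ge0.
exists m.+1 => //; apply: key; rewrite mE; move: hc; rewrite intrD.
move=> /andP[a b]; apply/andP; split; lra.
Qed.
Lemma gauss_step (R : realType) (S : set R) (N d : nat) (e x : R) (k : int) :
  (forall (y : R) (K : int), 0 < y <= 1 -> `|N%:R * y - K%:~R| < e -> S y) ->
  (0 < d)%N -> (d %| N)%N -> (2 <= N %/ d)%N -> 0 < x < 1 ->
  `|d%:R * x - k%:~R| < e -> ~ S x -> one_step (@Omega R) S x.
Proof.
move=> memb d0 dN n2 /andP[x0 x1] hk nSx.
set n := (N %/ d)%N.
have Nn : (N%:R : R) = n%:R * d%:R by rewrite -natrM /n divnK.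
have n0 : (0 : R) < n%:R by rewrite ltr0n; apply: leq_trans n2.
have key : forall j : nat, N%:R * ((x + j%:R) / n%:R) - (k + (d * j)%N%:Z)%:~R
      = d%:R * x - k%:~R.
  move=> j; rewrite Nn intrD /=.
  change (((d * j)%N%:Z)%:~R : R) with (((d * j)%N)%:R : R).
  rewrite natrM; field; by rewrite gt_eqF.
have inmap : forall q, q \in [seq (x + j%:R) / n%:R | j <- iota 0 n] ->
    exists2 j : nat, (j < n)%N & q = (x + j%:R) / n%:R.
  by move=> q /mapP [j]; rewrite mem_iota add0n => /andP[_ jn] ->; exists j.
have entS : forall j : nat, (j < n)%N -> S ((x + j%:R) / n%:R).
  move=> j jn; apply: (memb _ (k + (d * j)%N%:Z)); last by rewrite key.
  have jn' : (j%:R : R) + 1 <= n%:R by rewrite natr1 ler_nat.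
  have := ler0n R j => j0.
  apply/andP; split; first by apply: divr_gt0 => //; lra.
  by rewrite ler_pdivrMr // mul1r; lra.
exists (gauss_list n x); split; [split|split].
- move=> q; rewrite /gauss_list inE => /orP[/eqP->|/inmap [j jn ->]].
    by rewrite /Omega /=.
  rewrite /Omega /=; apply: divr_gt0 => //; have := ler0n R j; lra.
- by right; right; exists n, x.
- rewrite /gauss_list /= eqxx add1n; apply/eqP; rewrite eqSS; apply/eqP.
  apply/count_memPn/negP => /inmap [j jn xE]; apply: nSx.
  by rewrite {1}xE; apply: entS.
- move=> q; rewrite /gauss_list inE => /orP[/eqP->|/inmap [j jn ->]].
    by rewrite eqxx.
  by move=> _; apply: entS.
Qed.
Lemma Ik_eq (R : realType) (N : nat) (e c : R) : (0 < N)%N ->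
  [set y : R | `|N%:R * y - c| < e] = `](c - e) / N%:R, (c + e) / N%:R[%classic.
Proof.
move=> N0; have Np : (0 : R) < N%:R by rewrite ltr0n.
apply/seteqP; split => y /=; rewrite in_itv /= ltr_distl ltr_pdivrMr // ltr_pdivlMr //
  [y * _]mulrC //.
Qed.
Lemma Ik_meas (R : realType) (N : nat) (e c : R) : (0 < N)%N -> 0 < e ->
  lebesgue_measure [set y : R | `|N%:R * y - c| < e] = (2 * e / N%:R)%:E.
Proof.
move=> N0 e0; rewrite Ik_eq // lebesgue_measure_itv /=.
have Np : (0 : R) < N%:R by rewrite ltr0n.
rewrite lte_fin ltr_pM2r ?invr_gt0 //.
have -> : c - e < c + e by lra.
rewrite -EFinD; congr (_%:E); field; by rewrite gt_eqF.
Qed.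
Lemma arith (R : realFieldType) (a c d : R) : 0 < a -> 1 <= c -> 4 < d * a ->
  2 * a^-1 / c * (c + 1) < d.
Proof.
move=> a0 c1 h.
have c0 : 0 < c by lra.
have -> : 2 * a^-1 / c * (c + 1) = (2 * (c + 1)) / (a * c).
  by field; rewrite ?gt_eqF.
rewrite ltr_pdivrMr ?mulr_gt0 //.
nra.
Qed.

Theorem mainTheorem8 (R : realType) (delta : R) (hdelta : 0 < delta) :
  exists S : set R,
    measurable S /\ S `<=` @Omega R /\
    (lebesgue_measure S < delta%:E)%E /\
    fundamental_set (@Omega R) S.
Proof.
set m := Num.bound (4 / delta).
set M := m.+1.
have hM : 4 / delta < M%:R.
  apply: lt_trans (archi_boundP _) _; first by apply: divr_ge0 => //; lra.
  by rewrite ltr_nat.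
set N := (2 * M`!)%N.
have N0 : (0 < N)%N by rewrite /N muln_gt0 fact_gt0.
have Np : (0 : R) < N%:R by rewrite ltr0n.
have N1 : (1 : R) <= N%:R by rewrite ler1n.
set e : R := M%:R^-1.
have Mp : (0 : R) < M%:R by rewrite ltr0n.
have e0 : 0 < e by rewrite invr_gt0.
have e1 : e <= 1 by rewrite invr_le1 // ?ler1n // unitfE gt_eqF.
pose Ik (k : nat) := [set y : R | `|N%:R * y - k%:R| < e].
pose S := [set y : R | 0 < y] `&` \bigcup_(k in `I_N.+1) Ik k.
have memb : forall (y : R) (K : int), 0 < y <= 1 -> `|N%:R * y - K%:~R| < e -> S y.
  move=> y K /andP[y0 y1] hK.
  have Ny : 0 < N%:R * y by apply: mulr_gt0.
  have Ny1 : N%:R * y <= N%:R by rewrite -[X in _ <= X]mulr1 ler_pM2l.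
  move: (hK); rewrite ltr_distl => /andP[a b].
  have Kl : (-1 : R) < K%:~R by lra.
  have Ku : (K%:~R : R) < (N.+1)%:R by rewrite -natr1; lra.
  have h1 : ((-1 : int)%:~R : R) < K%:~R by rewrite intrN mulr1z.
  have h2 : (K%:~R : R) < ((N.+1)%:Z)%:~R by rewrite -pmulrn.
  rewrite ltr_int in h1; rewrite ltr_int in h2.
  have K0 : (0 <= K)%R by move: h1; clear; lia.
  split; first by [].
  exists `|K|%N.
    by rewrite /= -ltz_nat gez0_abs.
  rewrite /Ik /=; have -> : ((`|K|%N)%:R : R) = K%:~R by rewrite pmulrn gez0_abs.
  exact: hK.
have Ikm : forall k, measurable (Ik k).
  by move=> k; rewrite /Ik Ik_eq //; apply: measurable_itv.
have Sm : measurable S.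
  apply: measurableI.
    have -> : [set y : R | 0 < y] = `]0, +oo[%classic.
      by apply/seteqP; split => y /=; rewrite in_itv /= andbT.
    exact: measurable_itv.
  apply: fin_bigcup_measurable; [exact: finite_II | move=> k _; exact: Ikm].
exists S; split; first exact: Sm.
split; first by move=> y [].
split.
  apply: (@le_lt_trans _ _ (\sum_(k < N.+1) lebesgue_measure (Ik k))%E).
    apply: content_subadditive; [move=> k _; exact: Ikm | exact: Sm |].
    move=> y [_ Hy]; have E : \bigcup_(k < N.+1) Ik k = \big[setU/set0]_(k < N.+1) Ik k by exact: bigcup_mkord.
    by rewrite -E.
  under eq_bigr => k _ do rewrite /Ik Ik_meas //.
  rewrite sumEFin lte_fin sumr_const card_ord.
  rewrite -[X in X < _]mulr_natr -[(N.+1)%:R]natr1.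
  have h4 : 4 < delta * M%:R by rewrite -ltr_pdivrMl // mulrC.
  exact: arith.
split; first by move=> y [].
apply: closure_from; first by move=> y [].
move=> x /andP[x0 x1].
have [Sx|nSx] := pselect (S x); first by left.
right.
have xlt1 : x < 1.
  rewrite lt_neqAle x1 andbT; apply/negP => /eqP xE; apply: nSx.
  apply: (memb _ N%:Z); first by rewrite xE ltr01 lexx.
  by rewrite xE mulr1 subrr normr0.
have [d [/andP[d0 dM] [k hk]]] := dirichlet R x m.
apply: (@gauss_step R S N d e x k memb d0) => //.
- by rewrite /N dvdn_mull // dvdn_fact // d0.
- rewrite /N -muln_divA ?dvdn_fact ?d0 //.
  rewrite -[2%N]muln1 leq_mul2l /= divn_gt0 //.
  by apply: dvdn_leq; [exact: fact_gt0 | rewrite dvdn_fact ?d0].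
- by rewrite x0 xlt1.
Qed.
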